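(* The formal system CC (Constructive Concepts) is consistent; that is, $\bot$ is not a theorem of CC.
   Context: The language of CC is the first-order language of set theory (binary relation symbols $\in$ and $=$), augmented by a unary logical operator $\Box$ (read ''is provable''). Formulas are built up in the usual way from atomic formulas using $\wedge,\vee,\to,\forall,\exists$, with the additional clause that if $A$ is a formula then so is $\Box A$. The symbol $\bot$ abbreviates the sentence $(\forall x)(\forall y)(x\in y)$, and $\neg A$ abbreviates $A\to\bot$. CC consists of the axioms and deduction rules of intuitionistic predicate calculus with equality, together with: (1) $A\to\Box A$; (2) $\Box(A\wedge B)\leftrightarrow(\Box A\wedge\Box B)$; (3) $\Box(A\vee B)\leftrightarrow(\Box A\vee\Box B)$; (4) $\Box((\exists x)A)\leftrightarrow(\exists x)\Box A$; (5) $\Box((\forall x)A)\leftrightarrow(\forall x)\Box A$; (6) $\Box(A\to B)\to(\Box A\to\Box B)$; the deduction rule: from $\Box A$ infer $A$; (7) extensionality: $x=y\leftrightarrow(\forall u)(u\in x\leftrightarrow u\in y)$; (8) comprehension scheme: $(\exists x)(\forall r)(r\in x\leftrightarrow\Box A)$, where $r$ is a fixed variable, $x$ is any variable, and $A$ is any formula (of the language with $\Box$) in which $x$ does not occur free. Here $A,B$ range over all formulas of the language. *)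

(* Defs.v *)
(* Deep embedding of the formal system CC (Constructive Concepts).
   Variables are de Bruijn indices (nat); the only terms are variables. *)

Inductive form : Type :=
| Mem : nat -> nat -> form          (* x ∈ y *)
| Eq  : nat -> nat -> form
| And : form -> form -> form
| Or  : form -> form -> form
| Imp : form -> form -> form
| All : form -> form
| Ex  : form -> form
| Box : form -> form.               (* "is provable" *)

Definition up (s : nat -> nat) (n : nat) : nat :=
  match n with 0 => 0 | S m => S (s m) end.

(* Renaming = substitution, since all terms are variables. *)
Fixpoint rename (s : nat -> nat) (A : form) : form :=
  match A with
  | Mem i j => Mem (s i) (s j)
  | Eq i j => Eq (s i) (s j)
  | And A B => And (rename s A) (rename s B)
  | Or A B => Or (rename s A) (rename s B)
  | Imp A B => Imp (rename s A) (rename s B)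
  | All A => All (rename (up s) A)
  | Ex A => Ex (rename (up s) A)
  | Box A => Box (rename s A)
  end.

Definition lift (A : form) : form := rename S A.

(* A[t/0]: substitute variable t for index 0 and lower the other free indices *)
Definition inst (t : nat) (A : form) : form :=
  rename (fun n => match n with 0 => t | S m => m end) A.

Definition Iff (A B : form) : form := And (Imp A B) (Imp B A).

Definition Bot : form := All (All (Mem 1 0)).

Definition Neg (A : form) : form := Imp A Bot.

(* Theorems of CC: Hilbert-style intuitionistic predicate calculus with
   equality (over the language with Box), plus the CC axioms and rule. *)
Inductive Provable : form -> Prop :=
| ax_K  : forall A B, Provable (Imp A (Imp B A))
| ax_S  : forall A B C,
    Provable (Imp (Imp A (Imp B C)) (Imp (Imp A B) (Imp A C)))
| ax_andI : forall A B, Provable (Imp A (Imp B (And A B)))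
| ax_andE1 : forall A B, Provable (Imp (And A B) A)
| ax_andE2 : forall A B, Provable (Imp (And A B) B)
| ax_orI1 : forall A B, Provable (Imp A (Or A B))
| ax_orI2 : forall A B, Provable (Imp B (Or A B))
| ax_orE : forall A B C,
    Provable (Imp (Imp A C) (Imp (Imp B C) (Imp (Or A B) C)))
| ax_efq : forall A, Provable (Imp Bot A)
| ax_allE : forall A t, Provable (Imp (All A) (inst t A))
| ax_exI  : forall A t, Provable (Imp (inst t A) (Ex A))
| ax_refl : forall t, Provable (Eq t t)
| ax_leib : forall A s t, Provable (Imp (Eq s t) (Imp (inst s A) (inst t A)))
| r_mp : forall A B, Provable (Imp A B) -> Provable A -> Provable B
| r_gen : forall A, Provable A -> Provable (All A)
| r_allI : forall A B, Provable (Imp (lift B) A) -> Provable (Imp B (All A))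
| r_exE : forall A B, Provable (Imp A (lift B)) -> Provable (Imp (Ex A) B)
| cc1 : forall A, Provable (Imp A (Box A))
| cc2 : forall A B, Provable (Iff (Box (And A B)) (And (Box A) (Box B)))
| cc3 : forall A B, Provable (Iff (Box (Or A B)) (Or (Box A) (Box B)))
| cc4 : forall A, Provable (Iff (Box (Ex A)) (Ex (Box A)))
| cc5 : forall A, Provable (Iff (Box (All A)) (All (Box A)))
| cc6 : forall A B, Provable (Imp (Box (Imp A B)) (Imp (Box A) (Box B)))
| cc_rule : forall A, Provable (Box A) -> Provable A
| cc7 : forall x y,
    Provable (Iff (Eq x y) (All (Iff (Mem 0 (S x)) (Mem 0 (S y)))))
(* (8) comprehension: (exists x)(forall r)(r ∈ x <-> Box A), where in A the
   index 0 is the variable r and x does not occur free in A *)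
| cc8 : forall A,
    Provable (Ex (All (Iff (Mem 0 1) (Box (rename (up S) A))))).

(* Main.v *)
Require Import Defs.
From Stdlib Require Import Lia FunctionalExtensionality PropExtensionality.

(* Kripke-style model: worlds are naturals, world 0 is trivial, Box at S k is
   truth at k; the domain is built from a tower of levels. *)

Fixpoint D (n : nat) : Type :=
  match n with 0 => unit | S n => (D n * (D n -> Prop))%type end.

Definition Dom := forall n, D n -> Prop.

Fixpoint N (x : Dom) (n : nat) : D n -> Prop :=
  match n return D n -> Prop with
  | 0 => fun s => x 0 s
  | S n => fun s => x (S n) s /\ N x n (fst s)
  end.

Fixpoint nproj (n : nat) (x : Dom) : D n :=
  match n return D n with
  | 0 => tt
  | S n => (nproj n x, fun s => (exists d, nproj n d = s) /\ N x n s)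
  end.

Definition scons (d : Dom) (r : nat -> Dom) (n : nat) : Dom :=
  match n with 0 => d | S n => r n end.

Definition dummy : Dom := fun _ _ => False.

Fixpoint ev (A : form) (m : nat) (r : nat -> Dom) : Prop :=
  match A with
  | Mem i j => match m with 0 => True | S k => N (r j) k (nproj k (r i)) end
  | Eq i j => nproj m (r i) = nproj m (r j)
  | And A B => ev A m r /\ ev B m r
  | Or A B => ev A m r \/ ev B m r
  | Imp A B => forall k, k <= m -> ev A k r -> ev B k r
  | All A => forall d, ev A m (scons d r)
  | Ex A => exists d, ev A m (scons d r)
  | Box A => match m with 0 => True | S k => ev A k r end
  end.

Lemma pers1 : forall A m r, ev A (S m) r -> ev A m r.
Proof.
  induction A; intros m r H; simpl in *.
  - destruct m; [exact I|]. exact (proj2 H).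
  - apply (f_equal fst) in H. exact H.
  - destruct H; split; auto.
  - destruct H; auto.
  - intros k Hk. apply H. lia.
  - intros d. apply IHA. apply H.
  - destruct H as [d Hd]. exists d. auto.
  - destruct m; [exact I|]. apply IHA. exact H.
Qed.

Lemma pers : forall A k m r, k <= m -> ev A m r -> ev A k r.
Proof.
  intros A k m r Hk. induction Hk; auto.
  intros H. apply IHHk. apply pers1. exact H.
Qed.

Lemma nproj_le : forall k m x y, k <= m -> nproj m x = nproj m y -> nproj k x = nproj k y.
Proof.
  intros k m x y Hk. induction Hk; auto.
  intros H. apply IHHk. apply (f_equal fst) in H. exact H.
Qed.

Lemma nproj_N : forall k x y d, nproj (S k) x = nproj (S k) y ->
  (N x k (nproj k d) <-> N y k (nproj k d)).
Proof.
  intros k x y d H.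
  assert (E := f_equal (fun p => snd p (nproj k d)) H). simpl in E.
  split; intros Hn.
  - assert (Hh : (exists d0, nproj k d0 = nproj k d) /\ N x k (nproj k d)) by (split; eauto).
    rewrite E in Hh. apply Hh.
  - assert (Hh : (exists d0, nproj k d0 = nproj k d) /\ N y k (nproj k d)) by (split; eauto).
    rewrite <- E in Hh. apply Hh.
Qed.

Lemma eq_ext : forall k x y,
  (forall j d, j < k -> (N x j (nproj j d) <-> N y j (nproj j d))) ->
  nproj k x = nproj k y.
Proof.
  induction k; intros x y H; simpl; [reflexivity|].
  f_equal.
  - apply IHk. intros j d Hj. apply H. lia.
  - apply functional_extensionality. intros s. apply propositional_extensionality.
    split; intros [[d Hd] Hn]; subst; split; eauto; apply (H k d); auto.
Qed.

Lemma ev_inv : forall A m r r', (forall i, nproj m (r i) = nproj m (r' i)) ->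
  (ev A m r <-> ev A m r').
Proof.
  induction A; intros m r r' H; simpl.
  - destruct m; [tauto|].
    assert (Hi := H n). apply (f_equal fst) in Hi. simpl in Hi. rewrite Hi.
    apply nproj_N. apply H.
  - rewrite (H n), (H n0). tauto.
  - rewrite (IHA1 m r r' H), (IHA2 m r r' H). tauto.
  - rewrite (IHA1 m r r' H), (IHA2 m r r' H). tauto.
  - split; intros Hi k Hk.
    + rewrite <- (IHA1 k r r'), <- (IHA2 k r r'); auto;
        intros i; apply (nproj_le k m); auto.
    + rewrite (IHA1 k r r'), (IHA2 k r r'); auto;
        intros i; apply (nproj_le k m); auto.
  - split; intros Hd d.
    + rewrite <- (IHA m (scons d r) (scons d r')); auto. intros [|i]; simpl; auto.
    + rewrite (IHA m (scons d r) (scons d r')); auto. intros [|i]; simpl; auto.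
  - split; intros [d Hd]; exists d.
    + rewrite <- (IHA m (scons d r) (scons d r')); auto. intros [|i]; simpl; auto.
    + rewrite (IHA m (scons d r) (scons d r')); auto. intros [|i]; simpl; auto.
  - destruct m; [tauto|]. apply IHA. intros i. apply (nproj_le m (S m)); auto.
Qed.

Lemma ev_rename : forall A s m r r', (forall n, r' n = r (s n)) ->
  (ev (rename s A) m r <-> ev A m r').
Proof.
  induction A; intros s m r r' H; simpl.
  - rewrite !H. tauto.
  - rewrite !H. tauto.
  - rewrite (IHA1 s m r r' H), (IHA2 s m r r' H). tauto.
  - rewrite (IHA1 s m r r' H), (IHA2 s m r r' H). tauto.
  - split; intros Hi k Hk.
    + rewrite <- (IHA1 s k r r' H), <- (IHA2 s k r r' H); auto.
    + rewrite (IHA1 s k r r' H), (IHA2 s k r r' H); auto.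
  - split; intros Hd d.
    + rewrite <- (IHA (up s) m (scons d r) (scons d r')); auto. intros [|i]; simpl; auto.
    + rewrite (IHA (up s) m (scons d r) (scons d r')); auto. intros [|i]; simpl; auto.
  - split; intros [d Hd]; exists d.
    + rewrite <- (IHA (up s) m (scons d r) (scons d r')); auto. intros [|i]; simpl; auto.
    + rewrite (IHA (up s) m (scons d r) (scons d r')); auto. intros [|i]; simpl; auto.
  - destruct m; [tauto|]. apply IHA. auto.
Qed.

Lemma ev_inst : forall A t m r, ev (inst t A) m r <-> ev A m (scons (r t) r).
Proof.
  intros. unfold inst. apply ev_rename. intros [|n]; reflexivity.
Qed.

Lemma ev_lift : forall B d m r, ev (lift B) m (scons d r) <-> ev B m r.
Proof.
  intros. unfold lift. apply ev_rename. intros n; reflexivity.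
Qed.

Lemma ev0 : forall A r, ev A 0 r.
Proof.
  induction A; intros r; simpl; auto.
  - intros k Hk _. assert (k = 0) by lia. subst. auto.
  - exists dummy. auto.
Qed.

Lemma bot_false : forall m r, ~ ev Bot (S m) r.
Proof.
  intros m r H. simpl in H. specialize (H dummy dummy). simpl in H.
  destruct m; simpl in H; [exact H| exact (proj1 H)].
Qed.

Lemma sound : forall A, Provable A -> forall m r, ev A m r.
Proof.
  intros A HP. induction HP; intros m r; simpl.
  - intros k Hk HA k' Hk' _. eapply pers; eauto.
  - intros k Hk H1 k' Hk' H2 k'' Hk'' HA.
    apply (H1 k'' ltac:(lia) HA k'' (le_n _)). apply H2; auto.
  - intros k Hk HA k' Hk' HB. split; auto. eapply pers; eauto.
  - intros k Hk [H1 H2]; auto.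
  - intros k Hk [H1 H2]; auto.
  - intros k Hk H; auto.
  - intros k Hk H; auto.
  - intros k Hk H1 k' Hk' H2 k'' Hk'' [H3|H3].
    + apply H1; auto. lia.
    + apply H2; auto.
  - intros k Hk H. destruct k; [apply ev0|]. exfalso. exact (bot_false k r H).
  - intros k Hk H. apply ev_inst. apply H.
  - intros k Hk H. exists (r t). apply ev_inst. exact H.
  - reflexivity.
  - intros k Hk HE k' Hk' H. apply ev_inst. apply ev_inst in H.
    revert H. apply ev_inv. intros [|i]; simpl; auto.
    apply (nproj_le k' k); auto.
  - apply (IHHP1 m r m (le_n _)). apply IHHP2.
  - intros d. apply IHHP.
  - intros k Hk HB d. apply (IHHP m (scons d r) k Hk). apply ev_lift. exact HB.
  - intros k Hk [d Hd]. apply (ev_lift B d k r). apply (IHHP m (scons d r) k Hk). exact Hd.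
  - intros k Hk HA. destruct k; auto. apply pers1. exact HA.
  - split; intros k Hk; destruct k; simpl; tauto.
  - split; intros k Hk; destruct k; simpl; tauto.
  - split; intros k Hk; destruct k; simpl; auto. exists dummy; auto.
  - split; intros k Hk; destruct k; simpl; auto.
  - intros k Hk H1 k' Hk' H2. destruct k'; auto. destruct k; [lia|].
    apply H1; auto. lia.
  - exact (IHHP (S m) r).
  - split.
    + intros k Hk HE d. split; intros k' Hk' Hm; destruct k'; simpl in *; auto.
      * apply (nproj_N k' (r x) (r y) d); auto. apply (nproj_le _ k); auto.
      * apply (nproj_N k' (r x) (r y) d); auto. apply (nproj_le _ k); auto.
    + intros k Hk H. apply eq_ext. intros j d Hj. destruct (H d) as [H1 H2].
      split; intros Hn.
      * apply (H1 (S j) Hj Hn).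
      * apply (H2 (S j) Hj Hn).
  - exists (fun j s => exists d, nproj j d = s /\ ev A j (scons d r)).
    intros d.
    assert (Hb : forall k, ev (rename (up S) A) k
        (scons d (scons (fun j s => exists d, nproj j d = s /\ ev A j (scons d r)) r))
        <-> ev A k (scons d r)).
    { intros k. apply ev_rename. intros [|n]; reflexivity. }
    assert (Hx : forall j, (exists d0, nproj j d0 = nproj j d /\ ev A j (scons d0 r))
                           <-> ev A j (scons d r)).
    { intros j. split.
      - intros [d0 [E H0]]. revert H0. apply ev_inv. intros [|i]; simpl; auto.
      - intros H0. exists d. auto. }
    assert (HN : forall j, N (fun j s => exists d, nproj j d = s /\ ev A j (scons d r)) j (nproj j d)
                   <-> ev A j (scons d r)).
    { induction j.
      - exact (Hx 0).
      - change ((exists d0, nproj (S j) d0 = nproj (S j) d /\ ev A (S j) (scons d0 r))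
           /\ N (fun j s => exists d, nproj j d = s /\ ev A j (scons d r)) j (nproj j d)
           <-> ev A (S j) (scons d r)).
        rewrite IHj, Hx. split; [tauto|]. intros H0; split; auto. apply pers1; auto. }
    split; intros k Hk; destruct k; simpl; auto.
    + intros H0. apply Hb. apply HN. exact H0.
    + intros H0. apply HN. apply Hb. exact H0.
Qed.

Theorem theorem5p1 : ~ Provable Bot.
Proof.
  intros H. exact (bot_false 0 (fun _ => dummy) (sound Bot H 1 (fun _ => dummy))).
Qed.
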